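(* Let $n\ge2$ and let $\mathsf r=[r_1,\dots,r_{2n-2}]$ be a tree-like factorization of $\lambda_n$, written as $r_\ell=(\!(a_{\ell-1},a_\ell)\!)$ for integers $a_0<a_1<\dots<a_{2n-2}$. Then $a_0\equiv a_{2n-2}\equiv 0\pmod n$.
   Context: The affine symmetric group $\widetilde S_n$ is the group, under composition, of bijections $w:\mathbb Z\to\mathbb Z$ with $w(i+n)=w(i)+n$ and $\sum_{i=1}^n w(i)=\binom{n+1}{2}$. For $i\not\equiv j\pmod n$, $(\!(i,j)\!)$ is the affine reflection interchanging $i+kn$ and $j+kn$ for all $k\in\mathbb Z$; $(\!(i,j)\!)=(\!(j,i)\!)=(\!(i+kn,j+kn)\!)$. Let $\lambda_n$ be the element with $\lambda_n(k)=k+n$ for $k\not\equiv 0\pmod n$ and $\lambda_n(k)=k-n(n-1)$ for $k\equiv0\pmod n$; its reflection length (minimal number of reflections with product $\lambda_n$) is $2n-2$. $\textsc{fact}(\lambda_n)$ is the set of sequences $[r_1,\dots,r_{2n-2}]$ of reflections with $r_1r_2\cdots r_{2n-2}=\lambda_n$. Such a sequence is tree-like if one can write $r_k=(\!(a_{k-1},b_k)\!)$ with integers $a_{k-1}<b_k$ ($1\le k\le 2n-2$) such that $a_k\equiv b_k\pmod n$ ($1\le k\le 2n-3$); equivalently, after shifting representatives by multiples of $n$, there are integers $a_0<a_1<\dots<a_{2n-2}$ with $r_\ell=(\!(a_{\ell-1},a_\ell)\!)$ for all $\ell$. *)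

(* Defs.v *)
From Stdlib Require Import ZArith Lia.
Open Scope Z_scope.

Definition congr (n x y : Z) : Prop := x mod n = y mod n.

(* The affine reflection ((i,j)) of Z (for i not congruent to j mod n):
   interchanges i+kn and j+kn for all k, fixes every other integer. *)
Definition refl (n i j : Z) (x : Z) : Z :=
  if Z.eqb (x mod n) (i mod n) then x + (j - i)
  else if Z.eqb (x mod n) (j mod n) then x - (j - i)
  else x.

Definition is_reflection (n : Z) (f : Z -> Z) : Prop :=
  exists i j : Z, ~ congr n i j /\ forall x, f x = refl n i j x.

Definition lambda (n : Z) (k : Z) : Z :=
  if Z.eqb (k mod n) 0 then k - n * (n - 1) else k + n.

(* prodr r m = r 1 o r 2 o ... o r m (composition; prodr r 0 = id) *)
Fixpoint prodr (r : nat -> Z -> Z) (m : nat) : Z -> Z :=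
  match m with
  | O => fun x => x
  | S k => fun x => prodr r k (r (S k) x)
  end.

Definition is_fact (n : nat) (r : nat -> Z -> Z) : Prop :=
  (forall l : nat, (1 <= l <= 2 * n - 2)%nat -> is_reflection (Z.of_nat n) (r l)) /\
  (forall x : Z, prodr r (2 * n - 2) x = lambda (Z.of_nat n) x).

Definition tree_like_witness (n : nat) (r : nat -> Z -> Z) (a : nat -> Z) : Prop :=
  (forall l : nat, (1 <= l <= 2 * n - 2)%nat -> a (l - 1)%nat < a l) /\
  (forall l : nat, (1 <= l <= 2 * n - 2)%nat ->
     forall x : Z, r l x = refl (Z.of_nat n) (a (l - 1)%nat) (a l) x).

Definition tree_like (n : nat) (r : nat -> Z -> Z) : Prop :=
  exists a : nat -> Z, tree_like_witness n r a.

(* Main.v *)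
Require Import Defs.
From Stdlib Require Import ZArith Lia.
Open Scope Z_scope.

Lemma refl_same_class (N a b x : Z) : N > 0 -> a mod N = b mod N ->
  (refl N a b x) mod N = x mod N.
Proof.
  intros HN Hab.
  assert (Hk : exists k, b - a = k * N).
  { exists (b / N - a / N).
    pose proof (Z_div_mod_eq_full a N). pose proof (Z_div_mod_eq_full b N). lia. }
  destruct Hk as [k Hk].
  unfold refl.
  destruct (Z.eqb _ _).
  - rewrite Hk. apply Z_mod_plus_full.
  - destruct (Z.eqb _ _); [|reflexivity].
    replace (x - (b - a)) with (x + (-k) * N) by lia. apply Z_mod_plus_full.
Qed.

Lemma no_congr (N a b i j : Z) : N > 0 -> ~ congr N i j ->
  (forall x, refl N i j x = refl N a b x) -> a mod N <> b mod N.
Proof.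
  intros HN Hij H Hab. apply Hij. unfold congr.
  pose proof (H i) as Hi. unfold refl at 1 in Hi. rewrite Z.eqb_refl in Hi.
  replace (i + (j - i)) with j in Hi by lia.
  rewrite Hi. symmetry. apply refl_same_class; auto.
Qed.

Theorem corollary3p5 (n : nat) (r : nat -> Z -> Z) (a : nat -> Z) :
  (2 <= n)%nat ->
  is_fact n r ->
  tree_like_witness n r a ->
  congr (Z.of_nat n) (a 0%nat) 0 /\ congr (Z.of_nat n) (a (2 * n - 2)%nat) 0.
Proof.
  intros Hn [Hrefl Hprod] [Hlt Hr].
  set (N := Z.of_nat n).
  assert (HN : N >= 2) by (unfold N; lia).
  assert (Hstep : forall k, (k < 2 * n - 2)%nat -> r (S k) (a (S k)) = a k).
  { intros k Hk.
    assert (H1 : (1 <= S k <= 2 * n - 2)%nat) by lia.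
    destruct (Hrefl _ H1) as [i [j [Hij Hf]]].
    assert (Hne : a k mod N <> a (S k) mod N).
    { apply (no_congr N (a k) (a (S k)) i j); try lia; auto.
      intro x. rewrite <- Hf. rewrite (Hr _ H1). simpl. now rewrite Nat.sub_0_r. }
    rewrite (Hr _ H1). simpl. rewrite Nat.sub_0_r. unfold refl. fold N.
    destruct (Z.eqb_spec (a (S k) mod N) (a k mod N)) as [E|E]; [congruence|].
    rewrite Z.eqb_refl. lia. }
  assert (Hchain : forall m, (m <= 2 * n - 2)%nat -> prodr r m (a m) = a 0%nat).
  { induction m as [|m IH]; intros Hm; simpl; [reflexivity|].
    rewrite Hstep by lia. apply IH; lia. }
  assert (Hinc : forall m, (1 <= m <= 2 * n - 2)%nat -> a 0%nat < a m).
  { induction m as [|m IH]; intros Hm; [lia|].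
    destruct m as [|m].
    - pose proof (Hlt 1%nat ltac:(lia)). simpl in *. lia.
    - pose proof (Hlt (S (S m)) ltac:(lia)). simpl in H.
      pose proof (IH ltac:(lia)). lia. }
  set (M := (2 * n - 2)%nat).
  pose proof (Hchain M (le_n _)) as HC.
  rewrite Hprod in HC. fold N in HC.
  pose proof (Hinc M ltac:(unfold M; lia)) as HI.
  unfold lambda in HC.
  destruct (Z.eqb_spec (a M mod N) 0) as [E|E]; [|lia].
  unfold congr. split.
  - rewrite <- HC. replace (a M - N * (N - 1)) with (a M + (-(N-1)) * N) by lia.
    rewrite Z_mod_plus_full. rewrite E. reflexivity.
  - rewrite E. reflexivity.
Qed.
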